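(* Let $p,q,k$ be nonnegative integers with $k\le2\min\{p,q\}$, let $Q$ be a binary quadratic form with discriminant $\Delta$, and let $\mathcal{T}=(Q^p,Q^q)_k$. If $k$ is odd then $\mathcal{T}=0$. If $k=2m$ is even then $$\mathcal{T}=Q^{p+q-2m}\,(-\Delta)^m\,\mathcal{N}^{\rm II}_{p,q,m},\qquad \mathcal{N}^{\rm II}_{p,q,m}=\frac{p!\,q!\,(2m)!\,(p+q-m)!\,(2p-2m)!\,(2q-2m)!}{(2p)!\,(2q)!\,m!\,(p+q-2m)!\,(p-m)!\,(q-m)!}.$$
   Context: For binary forms $A,B$ in $(x_0,x_1)$ of degrees $a,b$ and $k\ge0$, $(A,B)_k=\frac{(a-k)!(b-k)!}{a!\,b!}\bigl[\Omega^kA(x_0,x_1)B(y_0,y_1)\bigr]_{\underline{y}:=\underline{x}}$ with $\Omega=\frac{\partial^2}{\partial x_0\partial y_1}-\frac{\partial^2}{\partial x_1\partial y_0}$. The discriminant is normalized so that for $Q=\lambda x_0^2+\mu x_0x_1+\nu x_1^2$ one has $\Delta=\mu^2-4\lambda\nu$; equivalently, if $Q=(r_0x_0+r_1x_1)(s_0x_0+s_1x_1)$ then $\Delta=(r_0s_1-r_1s_0)^2$. *)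

(* Defs.v *)
From HB Require Import structures.
From mathcomp Require Import all_boot all_order all_algebra.
From mathcomp Require Import mpoly.
Set Implicit Arguments. Unset Strict Implicit. Unset Printing Implicit Defensive.
Import GRing.Theory.
Local Open Scope ring_scope.

(* Binary forms in (x0,x1) are elements of {mpoly R[2]} (variables 'X_0 = x0,
   'X_1 = x1).  To apply Omega we work in {mpoly R[4]} with
   'X_0 = x0, 'X_1 = x1, 'X_2 = y0, 'X_3 = y1. *)

Section Transvectant.
Variable R : fieldType.

Definition ix4 (i : nat) : 'I_4 := inord i.

Definition in_x (A : {mpoly R[2]}) : {mpoly R[4]} :=
  comp_mpoly [tuple 'X_(ix4 0); 'X_(ix4 1)] A.
Definition in_y (B : {mpoly R[2]}) : {mpoly R[4]} :=
  comp_mpoly [tuple 'X_(ix4 2); 'X_(ix4 3)] B.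
Definition diag_xy (F : {mpoly R[4]}) : {mpoly R[2]} :=
  comp_mpoly [tuple 'X_(inord 0 : 'I_2); 'X_(inord 1 : 'I_2);
                    'X_(inord 0 : 'I_2); 'X_(inord 1 : 'I_2)] F.

Definition Omega (F : {mpoly R[4]}) : {mpoly R[4]} :=
  mderiv (ix4 0) (mderiv (ix4 3) F) - mderiv (ix4 1) (mderiv (ix4 2) F).

(* k-th transvectant (A,B)_k of forms A, B of degrees a, b *)
Definition transvectant (a b k : nat) (A B : {mpoly R[2]}) : {mpoly R[2]} :=
  (((a - k)`! * (b - k)`!)%:R / ((a`! * b`!)%:R)) *:
    diag_xy (iter k Omega (in_x A * in_y B)).

Definition quadform (lam mu nu : R) : {mpoly R[2]} :=
  lam *: ('X_(inord 0 : 'I_2) ^+ 2)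
  + mu *: ('X_(inord 0 : 'I_2) * 'X_(inord 1 : 'I_2))
  + nu *: ('X_(inord 1 : 'I_2) ^+ 2).

Definition discr (lam mu nu : R) : R := mu ^+ 2 - 4%:R * lam * nu.

Definition NII (p q m : nat) : R :=
  (p`! * q`! * (2 * m)`! * (p + q - m)`! * (2 * p - 2 * m)`! * (2 * q - 2 * m)`!)%:R
  / ((2 * p)`! * (2 * q)`! * m`! * (p + q - 2 * m)`! * (p - m)`! * (q - m)`!)%:R.

End Transvectant.

(* Main.v *)
Require Import Defs.
From HB Require Import structures.
From mathcomp Require Import all_boot all_order all_algebra.
From mathcomp Require Import mpoly.
From mathcomp Require Import ring zify.
Import GRing.Theory.
Local Open Scope ring_scope.

Local Close Scope ring_scope.
Fixpoint Cc (p q j u : nat) : nat :=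
  match j with
  | 0 => nat_of_bool (u == 0)%N
  | j'.+1 => (Cc p q j' u * ((2*u - j') * ((2*u - j') + 1 + 2*(p-u) + 2*(q-u))) +
      (if u is u'.+1 then Cc p q j' u' * ((p-u') * (q-u')) else 0))%N
  end.

Lemma Cc_gt p q j u : (j < u)%N -> Cc p q j u = 0%N.
Proof.
elim: j u => [|j IH] [|u] //= H.
rewrite !IH //; exact: ltnW.
Qed.

Lemma Cc_lt p q j u : (2 * u < j)%N -> Cc p q j u = 0%N.
Proof.
elim: j u => [|j IH] u //= H.
have -> : (Cc p q j u * ((2*u - j) * ((2*u - j) + 1 + 2*(p-u) + 2*(q-u))) = 0)%N.
  case: (ltngtP (2*u) j) => h; first by rewrite IH // mul0n.

    lia.
  by rewrite h subnn mul0n muln0.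
case: u H => [|u] H //; rewrite IH //; lia.
Qed.

Definition G p q u v := (p ^_ u * q ^_ u * (p + q - u) ^_ v * 'C(u + v, v) * u ^_ v)%N.

Lemma G_rec p q u v : (0 < u)%N -> (u <= p)%N -> (u <= q)%N -> (v < u)%N ->
  G p q u v.+1 = (G p q u v * ((u - v) * ((u - v) + 1 + 2*(p-u) + 2*(q-u))) +
     G p q u.-1 v.+1 * ((p - u.-1) * (q - u.-1)))%N.
Proof.
case: u => [|u] // _ hp hq hv /=.
set N := (p + q - u.+1)%N.
have hpos : (0 < v.+1 * (u.+1 - v))%N by rewrite muln_gt0 /=; lia.
apply/eqP; rewrite -(eqn_pmul2l hpos); apply/eqP.
rewrite /G.
have e8p : p ^_ u.+1 = (p ^_ u * (p - u))%N by rewrite ffactnSr.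
have e8q : q ^_ u.+1 = (q ^_ u * (q - u))%N by rewrite ffactnSr.
have e1 : N ^_ v.+1 = (N ^_ v * (N - v))%N by rewrite ffactnSr.
have e2 : (p + q - u) ^_ v.+1 = (N.+1 * N ^_ v)%N.
  by rewrite -ffactSS /N; congr (_ ^_ _); lia.
have e3 : u.+1 ^_ v.+1 = (u.+1 * u ^_ v)%N by rewrite ffactSS.
have e4 : u ^_ v.+1 = (u ^_ v * (u - v))%N by rewrite ffactnSr.
have e5 : (u.+1 ^_ v * (u.+1 - v) = u.+1 * u ^_ v)%N by rewrite -ffactnSr ffactSS.
have e6 : (v.+1 * 'C(u.+1 + v.+1, v.+1) = (u.+1 + v).+1 * 'C(u.+1 + v, v))%N.
  by rewrite addnS -mul_bin_diag.
have e7 : (v.+1 * 'C(u + v.+1, v.+1) = u.+1 * 'C(u.+1 + v, v))%N.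
  by rewrite addnS -addSn mul_bin_left; congr (_ * _); lia.
move: e1 e2 e3 e4 e5 e6 e7 e8p e8q.
move: (p ^_ u) (q ^_ u) (N ^_ v) (u ^_ v) (u.+1 ^_ v) ('C(u.+1 + v, v)) => Pu Qu E L K Bn.
move=> -> -> -> -> e5 e6 e7 -> ->.
move: e6 e7; move: ('C(u.+1 + v.+1, v.+1)) ('C(u + v.+1, v.+1)) => C1 C2 e6 e7.
rewrite mulnDr.
have -> : (v.+1 * (u.+1 - v) *
  (Pu * (p - u) * (Qu * (q - u)) * (E * (N - v)) * C1 * (u.+1 * L)) =
  Pu * (p - u) * Qu * (q - u) * E * (N - v) * (u.+1 * L) * (u.+1 - v) * (v.+1 * C1))%N by lia.
have -> : (v.+1 * (u.+1 - v) * (Pu * (p - u) * (Qu * (q - u)) * E * Bn * K *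
   ((u.+1 - v) * (u.+1 - v + 1 + 2 * (p - u.+1) + 2 * (q - u.+1)))) =
   Pu * (p - u) * Qu * (q - u) * E * Bn * v.+1 * 
   ((u.+1 - v + 1 + 2 * (p - u.+1) + 2 * (q - u.+1))) * (u.+1 - v) * (K * (u.+1 - v)))%N by lia.
have -> : (v.+1 * (u.+1 - v) * (Pu * Qu * (N.+1 * E) * C2 * (L * (u - v)) * ((p - u) * (q - u)))
   = Pu * Qu * N.+1 * E * L * (u - v) * (p - u) * (q - u) * (u.+1 - v) * (v.+1 * C2))%N by lia.
rewrite e5 e6 e7 /N.
have [a ->] : exists a, p = (u.+1 + a)%N by exists (p - u.+1)%N; lia.
have [b ->] : exists b, q = (u.+1 + b)%N by exists (q - u.+1)%N; lia.
have [w ->] : exists w, u = (v + w)%N by exists (u - v)%N; lia.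
have -> : (v + w).+1 + a - (v + w) = a.+1 by lia.
have -> : (v + w).+1 + b - (v + w) = b.+1 by lia.
have -> : (v + w).+1 + a - (v + w).+1 = a by lia.
have -> : (v + w).+1 + b - (v + w).+1 = b by lia.
have -> : (v + w).+1 - v = w.+1 by lia.
have -> : (v + w) - v = w by lia.
have -> : ((v + w).+1 + a + ((v + w).+1 + b) - (v + w).+1 - v = w.+1 + a + b)%N by lia.
have -> : ((v + w).+1 + a + ((v + w).+1 + b) - (v + w).+1 = v + w.+1 + a + b)%N by lia.
lia.
Qed.

Lemma G_v0 p q u : G p q u 0 = (p ^_ u * q ^_ u)%N.
Proof. by rewrite /G ffactn0 bin0 ffactn0 !muln1. Qed.

Lemma Cc_closed p q j u : (u <= j)%N -> Cc p q j u = G p q u (j - u).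
Proof.
elim: j u => [|j IH] u hu.
  by case: u hu => // _; rewrite /= G_v0 !ffactn0.
rewrite /=.
case: (ltngtP u j.+1) hu => // hu' _; last first.
  rewrite hu' Cc_gt // mul0n add0n IH // !subnn !G_v0 !ffactnSr; lia.
rewrite IH //.
case: u hu' => [|u] hu /=.
  by rewrite /G ffact0n /= muln0 sub0n !mul0n !muln0.
rewrite IH; last lia.
have -> : (j.+1 - u.+1 = (j - u.+1).+1)%N by lia.
have -> : (j - u = (j - u.+1).+1)%N by lia.
have -> : (2 * u.+1 - j = u.+1 - (j - u.+1))%N by lia.
set v := (j - u.+1)%N.
case: (leqP u.+1 p) => hp; last first.
  rewrite /G (ffact_small hp); have -> : (p - u = 0)%N by lia.
  by rewrite ?mul0n ?muln0 ?mul0n.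
case: (leqP u.+1 q) => hq; last first.
  rewrite /G (ffact_small hq); have -> : (q - u = 0)%N by lia.
  by rewrite ?mul0n ?muln0 ?mul0n.
case: (ltnP v u.+1) => hv.
  by rewrite (@G_rec p q u.+1 v).
have hv1 : (u < v.+1)%N by lia.
rewrite /G (@ffact_small u.+1 v.+1) // (@ffact_small u v.+1) // ?muln0 ?addn0.
case: (ltngtP u.+1 v) hv => // h _.
  by rewrite (ffact_small h) ?muln0 ?mul0n.
by rewrite h subnn ?mul0n ?muln0.
Qed.

Lemma Cc_final p q m : (m <= p)%N -> (m <= q)%N ->
  (Cc p q (2 * m) m * (m`! * (p+q-2 * m)`! * (p-m)`! * (q-m)`!) =
   p`! * q`! * (2 * m)`! * (p+q-m)`!)%N.
Proof.
move=> hp hq.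
rewrite Cc_closed; last lia.
have -> : (2 * m - m = m)%N by lia.
rewrite /G ffactnn.
have e1 := ffact_fact hp. have e2 := ffact_fact hq.
have e3 : ((p + q - m) ^_ m * (p + q - 2 * m)`! = (p + q - m)`!)%N.
  by rewrite -(@ffact_fact (p + q - m) m); [congr (_ * _`!); lia | lia].
have e4 : ('C(m + m, m) * (m`! * m`!) = (2 * m)`!)%N.
  by rewrite mul2n -addnn -(@bin_fact (m + m) m) ?leq_addr // addnK.
rewrite -e1 -e2 -e3 -e4.
move: (p ^_ m) (q ^_ m) ((p + q - m) ^_ m) ('C(m + m, m)) (m`!) ((p + q - 2 * m)`!) ((p-m)`!) ((q-m)`!).
move=> *; lia.
Qed.

Local Open Scope ring_scope.
Section S.
Variable R : fieldType.
Variables lam mu nu : R.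

Local Notation P4 := {mpoly R[4]}.
Fact lk : unit. Proof. exact tt. Qed.
Definition x0 : P4 := locked_with lk 'X_(ix4 0).
Definition x1 : P4 := locked_with lk 'X_(ix4 1).
Definition y0 : P4 := locked_with lk 'X_(ix4 2).
Definition y1 : P4 := locked_with lk 'X_(ix4 3).
Definition cl : P4 := locked_with lk lam%:MP.
Definition cm : P4 := locked_with lk mu%:MP.
Definition cn : P4 := locked_with lk nu%:MP.
Definition AA : P4 := locked_with lk (cl * x0^+2 + cm * (x0 * x1) + cn * x1^+2).
Definition BB : P4 := locked_with lk (cl * y0^+2 + cm * (y0 * y1) + cn * y1^+2).
Definition WW : P4 := locked_with lk (x0 * y1 - x1 * y0).
Lemma x0E : x0 = 'X_(ix4 0). Proof. by rewrite /x0 unlock. Qed.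
Lemma x1E : x1 = 'X_(ix4 1). Proof. by rewrite /x1 unlock. Qed.
Lemma y0E : y0 = 'X_(ix4 2). Proof. by rewrite /y0 unlock. Qed.
Lemma y1E : y1 = 'X_(ix4 3). Proof. by rewrite /y1 unlock. Qed.
Lemma clE : cl = lam%:MP. Proof. by rewrite /cl unlock. Qed.
Lemma cmE : cm = mu%:MP. Proof. by rewrite /cm unlock. Qed.
Lemma cnE : cn = nu%:MP. Proof. by rewrite /cn unlock. Qed.
Lemma AAE : AA = cl * x0^+2 + cm * (x0 * x1) + cn * x1^+2. Proof. by rewrite /AA unlock. Qed.
Lemma BBE : BB = cl * y0^+2 + cm * (y0 * y1) + cn * y1^+2. Proof. by rewrite /BB unlock. Qed.
Lemma WWE : WW = x0 * y1 - x1 * y0. Proof. by rewrite /WW unlock. Qed.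

Lemma mderivXi (i j : 'I_4) : mderiv i ('X_j : P4) = (j == i)%:R.
Proof.
rewrite mderivX mnm1E; case: eqP => [->|_]; last by rewrite scale0r.
have -> : (U_(i) - U_(i) = 0)%MM by apply/mnmP=> k; rewrite mnmBE subnn mnm0E.
by rewrite mpolyX0 scale1r.
Qed.

Lemma mderivCc i (c : R) : mderiv i (c%:MP : P4) = 0.
Proof. exact: mderivC. Qed.

Lemma mderivXn i (F : P4) n : mderiv i (F ^+ n) = n%:R * F ^+ n.-1 * mderiv i F.
Proof.
elim: n => [|n IH].
  by rewrite expr0 !mul0r -(mpolyC1 4 R) mderivC.
rewrite exprS mderivM IH; case: n {IH} => [|n] /=.
  rewrite expr0; ring.
rewrite exprS; ring.
Qed.

Lemma ix4_eq (a b : nat) : (a < 4)%N -> (b < 4)%N -> (ix4 a == ix4 b) = (a == b).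
Proof. by move=> ha hb; rewrite /ix4 -val_eqE /= !inordK. Qed.


Ltac dsimp := rewrite ?(mderivD, mderivB, mderivN, mderivM, mderivXn, mderivCc, mderivXi) ?ix4_eq //=;
  rewrite ?expr0 ?expr1 /=.

Lemma dA0 : mderiv (ix4 0) AA = 2%:R * cl * x0 + cm * x1.
Proof. rewrite AAE clE cmE cnE x0E x1E; dsimp; ring. Qed.
Lemma dA1 : mderiv (ix4 1) AA = cm * x0 + 2%:R * cn * x1.
Proof. rewrite AAE clE cmE cnE x0E x1E; dsimp; ring. Qed.
Lemma dA2 : mderiv (ix4 2) AA = 0.
Proof. rewrite AAE clE cmE cnE x0E x1E; dsimp; ring. Qed.
Lemma dA3 : mderiv (ix4 3) AA = 0.
Proof. rewrite AAE clE cmE cnE x0E x1E; dsimp; ring. Qed.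
Lemma dB0 : mderiv (ix4 0) BB = 0.
Proof. rewrite BBE clE cmE cnE y0E y1E; dsimp; ring. Qed.
Lemma dB1 : mderiv (ix4 1) BB = 0.
Proof. rewrite BBE clE cmE cnE y0E y1E; dsimp; ring. Qed.
Lemma dB2 : mderiv (ix4 2) BB = 2%:R * cl * y0 + cm * y1.
Proof. rewrite BBE clE cmE cnE y0E y1E; dsimp; ring. Qed.
Lemma dB3 : mderiv (ix4 3) BB = cm * y0 + 2%:R * cn * y1.
Proof. rewrite BBE clE cmE cnE y0E y1E; dsimp; ring. Qed.
Lemma dW0 : mderiv (ix4 0) WW = y1.
Proof. rewrite WWE x0E x1E y0E y1E; dsimp; ring. Qed.
Lemma dW1 : mderiv (ix4 1) WW = - y0.
Proof. rewrite WWE x0E x1E y0E y1E; dsimp; ring. Qed.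
Lemma dW2 : mderiv (ix4 2) WW = - x1.
Proof. rewrite WWE x0E x1E y0E y1E; dsimp; ring. Qed.
Lemma dW3 : mderiv (ix4 3) WW = x0.
Proof. rewrite WWE x0E x1E y0E y1E; dsimp; ring. Qed.

Lemma mderiv_nat i n : mderiv i (n%:R : P4) = 0.
Proof. by rewrite -mpolyC_nat mderivC. Qed.

Lemma discrC : (discr lam mu nu)%:MP = cm ^+ 2 - 4%:R * cl * cn :> P4.
Proof. by rewrite /discr rmorphB /= rmorphXn /= !rmorphM /= mpolyC_nat clE cmE cnE. Qed.

Lemma scale_nat_mul n (P : P4) : n%:R *: P = n%:R * P.
Proof. by rewrite scaler_nat mulr_natl. Qed.

Lemma discrZ (P : P4) : discr lam mu nu *: P = (cm ^+ 2 - 4%:R * cl * cn) * P.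
Proof. by rewrite -mul_mpolyC discrC clE cmE cnE. Qed.

Lemma dcl i : mderiv i cl = 0. Proof. by rewrite clE mderivC. Qed.
Lemma dcm i : mderiv i cm = 0. Proof. by rewrite cmE mderivC. Qed.
Lemma dcn i : mderiv i cn = 0. Proof. by rewrite cnE mderivC. Qed.

Lemma dx0_0 : mderiv (ix4 0) x0 = 1. Proof. by rewrite x0E mderivXi ix4_eq. Qed.
Lemma dx0_1 : mderiv (ix4 1) x0 = 0. Proof. by rewrite x0E mderivXi ix4_eq. Qed.
Lemma dx0_2 : mderiv (ix4 2) x0 = 0. Proof. by rewrite x0E mderivXi ix4_eq. Qed.
Lemma dx0_3 : mderiv (ix4 3) x0 = 0. Proof. by rewrite x0E mderivXi ix4_eq. Qed.
Lemma dx1_0 : mderiv (ix4 0) x1 = 0. Proof. by rewrite x1E mderivXi ix4_eq. Qed.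
Lemma dx1_1 : mderiv (ix4 1) x1 = 1. Proof. by rewrite x1E mderivXi ix4_eq. Qed.
Lemma dx1_2 : mderiv (ix4 2) x1 = 0. Proof. by rewrite x1E mderivXi ix4_eq. Qed.
Lemma dx1_3 : mderiv (ix4 3) x1 = 0. Proof. by rewrite x1E mderivXi ix4_eq. Qed.
Lemma dy0_0 : mderiv (ix4 0) y0 = 0. Proof. by rewrite y0E mderivXi ix4_eq. Qed.
Lemma dy0_1 : mderiv (ix4 1) y0 = 0. Proof. by rewrite y0E mderivXi ix4_eq. Qed.
Lemma dy0_2 : mderiv (ix4 2) y0 = 1. Proof. by rewrite y0E mderivXi ix4_eq. Qed.
Lemma dy0_3 : mderiv (ix4 3) y0 = 0. Proof. by rewrite y0E mderivXi ix4_eq. Qed.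
Lemma dy1_0 : mderiv (ix4 0) y1 = 0. Proof. by rewrite y1E mderivXi ix4_eq. Qed.
Lemma dy1_1 : mderiv (ix4 1) y1 = 0. Proof. by rewrite y1E mderivXi ix4_eq. Qed.
Lemma dy1_2 : mderiv (ix4 2) y1 = 0. Proof. by rewrite y1E mderivXi ix4_eq. Qed.
Lemma dy1_3 : mderiv (ix4 3) y1 = 1. Proof. by rewrite y1E mderivXi ix4_eq. Qed.

Lemma predz : 0.-1 = 0%N. Proof. by []. Qed.

Lemma Omega_M a b d : Omega (AA^+a * BB^+b * WW^+d) =
  (d * (d + 1 + 2*a + 2*b))%:R *: (AA^+a * BB^+b * WW^+d.-1)
  - ((a*b)%:R * discr lam mu nu) *: (AA^+a.-1 * BB^+b.-1 * WW^+d.+1).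
Proof.
rewrite /Omega.
rewrite !(mderivD, mderivB, mderivN, mderivM, mderivXn, mderiv_nat,
   dA0, dA1, dA2, dA3, dB0, dB1, dB2, dB3, dW0, dW1, dW2, dW3).
rewrite !(mderivD, mderivB, mderivN, mderivM, mderiv_nat, mderiv0, dx0_0, dx0_1, dx0_2, dx0_3, dx1_0, dx1_1, dx1_2, dx1_3, dy0_0, dy0_1, dy0_2, dy0_3, dy1_0, dy1_1, dy1_2, dy1_3, dcl, dcm, dcn).
rewrite -scalerA discrZ !scale_nat_mul.
(case: a => [|a]; case: b => [|b]; case: d => [|[|d]]).
all: rewrite ?succnK ?predz.
all: repeat match goal with |- context [?F ^+ (S ?n)] =>
   let X := fresh in let HX := fresh in generalize (exprS F n); generalize (F ^+ (S n)); intros X HX; subst X end.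
all: repeat match goal with |- context [?F ^+ 0] =>
   let X := fresh in let HX := fresh in generalize (expr0 F); generalize (F ^+ 0); intros X HX; subst X end.
all: (repeat match goal with |- context [AA ^+ ?n] => generalize (AA ^+ n) => ? end;
  repeat match goal with |- context [BB ^+ ?n] => generalize (BB ^+ n) => ? end;
  repeat match goal with |- context [WW ^+ ?n] => generalize (WW ^+ n) => ? end).
all: rewrite ?AAE ?BBE ?WWE.
all: ring.
Qed.

Definition MM a b d : P4 := AA^+a * BB^+b * WW^+d.

Lemma Omega_MM a b d : Omega (MM a b d) =
  (d * (d + 1 + 2*a + 2*b))%:R *: MM a b d.-1
  - ((a*b)%:R * discr lam mu nu) *: MM a.-1 b.-1 d.+1.
Proof. exact: Omega_M. Qed.

Lemma Omega_sum n (F : 'I_n -> P4) : Omega (\sum_(i < n) F i) = \sum_(i < n) Omega (F i).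
Proof.
have OD (F1 G1 : P4) : Omega (F1 + G1) = Omega F1 + Omega G1.
  by rewrite /Omega !mderivD opprD addrACA.
have O0 : Omega (0 : P4) = 0 by rewrite /Omega !mderiv0 subr0.
exact: (big_morph _ OD O0).
Qed.

Lemma Omega_Z c (F : P4) : Omega (c *: F) = c *: Omega F.
Proof. by rewrite /Omega !mderivZ scalerBr. Qed.

Lemma CcS p q j u : Cc p q j.+1 u = (Cc p q j u * ((2*u - j) * ((2*u - j) + 1 + 2*(p-u) + 2*(q-u))) +
      (if u is u'.+1 then Cc p q j u' * ((p-u') * (q-u')) else 0))%N.
Proof. by []. Qed.

End S.



Section S.
Variable R : fieldType.
Variables lam mu nu : R.
Local Notation P4 := {mpoly R[4]}.
Local Notation AA := (@AA R lam mu nu).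
Local Notation BB := (@BB R lam mu nu).
Local Notation WW := (@WW R).
Local Notation MM := (@MM R lam mu nu).
Lemma iter_Omega p q j : iter j (@Omega R) (MM p q 0) =
  \sum_(u < j.+1) ((Cc p q j u)%:R * (- discr lam mu nu)^+u) *: MM (p-u) (q-u) (2*u - j).
Proof.
set De := discr lam mu nu.
elim: j => [|j IH].
  by rewrite big_ord1 /= subn0 !subn0 expr0 mulr1 scale1r.
rewrite iterS IH Omega_sum.
pose D u := ((2*u - j) * ((2*u - j) + 1 + 2*(p-u) + 2*(q-u)))%N.
pose T1 (i : nat) := ((Cc p q j i * D i)%:R * (- De)^+i) *: MM (p-i) (q-i) (2*i - j.+1).
pose T2 (i : nat) := ((Cc p q j i * ((p-i)*(q-i)))%:R * (- De)^+i.+1) *: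
     MM (p - i.+1) (q - i.+1) (2*i.+1 - j.+1).
transitivity (\sum_(i < j.+1) (T1 i + T2 i)).
  apply: eq_bigr => i _.
  rewrite Omega_Z Omega_MM scalerBr !scalerA /T1 /T2 -/De -!subnS.
  case: (ltnP (2*i) j) => h.
    by rewrite Cc_lt // !mul0n !mul0r !scale0r subr0 addr0.
  have -> : (2 * i - j).+1 = (2 * i.+1 - j.+1)%N by lia.
  rewrite -scaleNr /D; congr (_ *: _ + _ *: _); rewrite !natrM ?exprS; ring.
rewrite big_split.
under [RHS]eq_bigr => u _ do rewrite CcS natrD !mulrDl scalerDl.
rewrite big_split; congr (_ + _).
  rewrite [RHS]big_ord_recr /= Cc_gt // mul0n mul0r scale0r addr0.
  by apply: eq_bigr => i _.
rewrite [RHS]big_ord_recl /= mul0r scale0r add0r.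
by apply: eq_bigr => i _.
Qed.

Local Notation Q := (quadform lam mu nu).

Lemma in_xQ : in_x Q = AA.
Proof.
rewrite /in_x /quadform !comp_mpolyD !comp_mpolyZ !rmorphM /= !comp_mpolyXU !inordK //=.
rewrite AAE clE cmE cnE x0E x1E -!mul_mpolyC; ring.
Qed.

Lemma in_yQ : in_y Q = BB.
Proof.
rewrite /in_y /quadform !comp_mpolyD !comp_mpolyZ !rmorphM /= !comp_mpolyXU !inordK //=.
rewrite BBE clE cmE cnE y0E y1E -!mul_mpolyC; ring.
Qed.

Lemma diag_AA : diag_xy AA = Q.
Proof.
rewrite AAE clE cmE cnE x0E x1E /diag_xy !comp_mpolyD !rmorphM ?rmorphXn /= !comp_mpolyXU !comp_mpolyC.
rewrite /quadform /ix4 !inordK //= -!mul_mpolyC; ring.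
Qed.

Lemma diag_BB : diag_xy BB = Q.
Proof.
rewrite BBE clE cmE cnE y0E y1E /diag_xy !comp_mpolyD !rmorphM ?rmorphXn /= !comp_mpolyXU !comp_mpolyC.
rewrite /quadform /ix4 !inordK //= -!mul_mpolyC; ring.
Qed.

Lemma diag_WW : diag_xy WW = 0.
Proof.
rewrite WWE x0E x1E y0E y1E /diag_xy !comp_mpolyB !rmorphM /= !comp_mpolyXU.
by rewrite /ix4 !inordK //= mulrC subrr.
Qed.

Lemma diag_MM a b d : diag_xy (MM a b d) = Q ^+ a * Q ^+ b * 0 ^+ d.
Proof. by rewrite /MM /diag_xy !rmorphM !rmorphXn /= -!/(diag_xy _) diag_AA diag_BB diag_WW. Qed.

End S.

Lemma factR_neq0 (R : fieldType) (hchar : [pchar R] =i pred0) n : (n`!%:R : R) != 0.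
Proof. by rewrite ((pcharf0P R).1 hchar) -lt0n fact_gt0. Qed.

Theorem mainTheorem10 (R : fieldType) (hchar : [pchar R] =i pred0)
  (lam mu nu : R) (p q k : nat) (hk : (k <= 2 * minn p q)%N) :
  let Q := quadform lam mu nu in
  let T := transvectant (2 * p) (2 * q) k (Q ^+ p) (Q ^+ q) in
  (odd k -> T = 0) /\
  (forall m : nat, k = (2 * m)%N ->
     T = ((- discr lam mu nu) ^+ m * NII R p q m) *: Q ^+ (p + q - 2 * m)).
Proof.
move=> Q T.
set De := discr lam mu nu.
set c := (((2 * p - k)`! * (2 * q - k)`!)%:R / ((2 * p)`! * (2 * q)`!)%:R : R).
have hx : in_x (Q ^+ p) = (@AA R lam mu nu) ^+ p by rewrite -in_xQ /in_x rmorphXn.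
have hy : in_y (Q ^+ q) = (@BB R lam mu nu) ^+ q by rewrite -in_yQ /in_y rmorphXn.
have hM : (@AA R lam mu nu) ^+ p * (@BB R lam mu nu) ^+ q = MM R lam mu nu p q 0
  by rewrite /MM expr0 mulr1.
have hT : T = c *: \sum_(u < k.+1) ((Cc p q k u)%:R * (- De) ^+ u) *:
    (Q ^+ (p - u) * Q ^+ (q - u) * 0 ^+ (2 * u - k)).
  rewrite /T /transvectant -/c hx hy hM iter_Omega; congr (_ *: _).
  rewrite /diag_xy raddf_sum; apply: eq_bigr => u _.
  apply: etrans; first exact: comp_mpolyZ.
  congr (_ *: _); exact: diag_MM.
split.
  move=> hodd; rewrite hT big1 ?scaler0 // => u _.
  case: (ltnP (2 * u) k) => h; first by rewrite Cc_lt // mul0r scale0r.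
  rewrite expr0n.
  have -> : (2 * u - k == 0)%N = false by apply/negbTE; move: hodd h; case: (2 * u - k =P 0)%N => //; lia.
  by rewrite mulr0 scaler0.
move=> m hkm.
have hmp : (m <= p)%N by move: hk; rewrite hkm; lia.
have hmq : (m <= q)%N by move: hk; rewrite hkm; lia.
have hmk : (m < k.+1)%N by lia.
rewrite hT (bigD1 (Ordinal hmk)) //= big1 ?addr0; last first.
  move=> u hu.
  have hu' : ((u : nat) != m) by apply: contra hu => /eqP e; apply/eqP/val_inj.
  case: (ltnP (2 * u) k) => h; first by rewrite Cc_lt // mul0r scale0r.
  rewrite expr0n.
  have -> : (2 * u - k == 0)%N = false by move/eqP: hu' => hne; apply/negbTE/eqP; lia.
  by rewrite mulr0 scaler0.
subst k.
have -> : (2 * m - 2 * m = 0)%N by lia.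
rewrite expr0 mulr1 -exprD scalerA.
have -> : (p - m + (q - m) = p + q - 2 * m)%N by lia.
congr (_ *: _).
have hC := @Cc_final p q m hmp hmq.
have eC : ((Cc p q (2 * m) m)%:R : R) = (p`! * q`! * (2 * m)`! * (p + q - m)`!)%:R /
   (m`! * (p + q - 2 * m)`! * (p - m)`! * (q - m)`!)%:R.
  apply: (canRL (mulfK _)); last by rewrite -natrM hC.
  by rewrite !natrM !mulf_neq0 // factR_neq0.
rewrite /c eC /NII !natrM.
by field; rewrite !(factR_neq0 _ hchar).
Qed.
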